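(* Let $r \le \min(M,N)$ be positive integers and let $\mathcal{P}=\mathcal{B}_\infty=\{\mathbf{x}\in\mathbb{R}^r \mid \|\mathbf{x}\|_\infty\le 1\}$. Let $\mathbf{H}_g\in\mathbb{R}^{M\times r}$ have full column rank, let $\mathbf{S}_g\in\mathbb{R}^{r\times N}$ have all of its columns in $\mathcal{P}$, and set $\mathbf{Y}=\mathbf{H}_g\mathbf{S}_g$. Suppose $\mathbf{S}_g$ is a sufficiently scattered factor corresponding to $\mathcal{P}$ (as defined in the context). Consider the Det-Max optimization problem $$\max_{\mathbf{H}\in\mathbb{R}^{M\times r},\ \mathbf{S}\in\mathbb{R}^{r\times N}} \det(\mathbf{S}\mathbf{S}^T)\quad\text{subject to}\quad \mathbf{Y}=\mathbf{H}\mathbf{S},\ \ \mathbf{S}_{:,j}\in\mathcal{P}\ \ (j=1,\dots,N).$$ Then every global optimum $(\mathbf{H}_*,\mathbf{S}_* )$ of this problem satisfies $$\mathbf{H}_*=\mathbf{H}_g\boldsymbol{\Pi}^T\mathbf{D},\qquad \mathbf{S}_*=\mathbf{D}\boldsymbol{\Pi}\mathbf{S}_g,$$ for some permutation matrix $\boldsymbol{\Pi}\in\mathbb{R}^{r\times r}$ and some invertible diagonal matrix $\mathbf{D}\in\mathbb{R}^{r\times r}$ with diagonal entries in $\{-1,+1\}$.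
   Context: $\mathbf{S}_{:,j}$ denotes the $j$-th column of $\mathbf{S}$; $\mathrm{conv}(\mathbf{S})$ is the convex hull of the columns of $\mathbf{S}$. For a convex polytope $\mathcal{P}\subset\mathbb{R}^r$ with nonempty interior, $\mathcal{E}_\mathcal{P}$ denotes its maximum volume inscribed ellipsoid (MVIE), i.e. the (unique) ellipsoid of maximal volume contained in $\mathcal{P}$, written $\mathcal{E}_\mathcal{P}=\{\mathbf{C}_\mathcal{P}\mathbf{u}+\mathbf{g}_\mathcal{P}\mid \|\mathbf{u}\|_2\le 1\}$ with $\mathbf{C}_\mathcal{P}\succeq 0$ and center $\mathbf{g}_\mathcal{P}$. For a set $C\subset\mathbb{R}^r$ and point $\mathbf{d}$, the polar of $C$ with respect to $\mathbf{d}$ is $C^{*,\mathbf{d}}=\{\mathbf{x}\in\mathbb{R}^r\mid \langle\mathbf{x},\mathbf{y}-\mathbf{d}\rangle\le 1\ \forall \mathbf{y}\in C\}$. $\mathrm{bd}(\cdot)$ denotes boundary and $\mathrm{ext}(\cdot)$ the set of extreme points (vertices). A matrix $\mathbf{S}\in\mathbb{R}^{r\times N}$ is called a sufficiently scattered factor corresponding to $\mathcal{P}$ if (i) $\mathcal{P}\supseteq\mathrm{conv}(\mathbf{S})\supset\mathcal{E}_\mathcal{P}$, and (ii) $\mathrm{conv}(\mathbf{S})^{*,\mathbf{g}_\mathcal{P}}\cap\mathrm{bd}(\mathcal{E}_\mathcal{P}^{*,\mathbf{g}_\mathcal{P}})=\mathrm{ext}(\mathcal{P}^{*,\mathbf{g}_\mathcal{P}})$.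 *)

(* Defs.v *)
From HB Require Import structures.
From mathcomp Require Import all_boot all_order all_algebra all_fingroup.
From mathcomp Require Import reals.
Set Implicit Arguments. Unset Strict Implicit. Unset Printing Implicit Defensive.
Import Order.TTheory GRing.Theory Num.Theory.
Local Open Scope ring_scope.

Section Defs.
Variable R : realType.
Variable r : nat.
Notation vec := 'cV[R]_r.

Definition subset (A B : vec -> Prop) := forall x, A x -> B x.

Definition dotv (x y : vec) : R := \sum_i x i 0 * y i 0.
Definition sqnorm (x : vec) : R := dotv x x.

Definition Binf : vec -> Prop := fun x => forall i, `|x i 0| <= 1.

Definition conv N (S : 'M[R]_(r, N)) : vec -> Prop :=
  fun x => exists lam : 'I_N -> R,
    (forall j, 0 <= lam j) /\ \sum_j lam j = 1 /\ x = \sum_j lam j *: col j S.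

Definition ellipsoid (C : 'M[R]_r) (g : vec) : vec -> Prop :=
  fun x => exists u : vec, sqnorm u <= 1 /\ x = C *m u + g.

Definition psd (C : 'M[R]_r) : Prop :=
  C^T = C /\ forall u : vec, 0 <= dotv u (C *m u).

(* (C, g) describes the maximum volume inscribed ellipsoid of P.  The volume
   of { C u + g | ||u||_2 <= 1 } with C psd equals det C times the volume of
   the Euclidean unit ball, so maximizing volume = maximizing det C. *)
Definition is_MVIE (P : vec -> Prop) (C : 'M[R]_r) (g : vec) : Prop :=
  psd C /\ subset (ellipsoid C g) P /\
  forall C' g', psd C' -> subset (ellipsoid C' g') P -> \det C' <= \det C.

Definition polar (A : vec -> Prop) (d : vec) : vec -> Prop :=
  fun x => forall y, A y -> dotv x (y - d) <= 1.

Definition bd (A : vec -> Prop) : vec -> Prop :=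
  fun x => forall e : R, 0 < e ->
    (exists y, A y /\ sqnorm (y - x) < e ^+ 2) /\
    (exists z, ~ A z /\ sqnorm (z - x) < e ^+ 2).

Definition ext (A : vec -> Prop) : vec -> Prop :=
  fun x => A x /\ forall y z (t : R), A y -> A z -> 0 < t < 1 ->
    x = t *: y + (1 - t) *: z -> y = z.

Definition suff_scattered N (S : 'M[R]_(r, N)) (P : vec -> Prop) : Prop :=
  exists C g, is_MVIE P C g /\
    subset (conv S) P /\ subset (ellipsoid C g) (conv S) /\
    (forall x, (polar (conv S) g x /\ bd (polar (ellipsoid C g) g) x)
               <-> ext (polar P g) x).
End Defs.

(* Main.v *)
Require Import Defs.
From mathcomp Require Import all_boot all_order all_algebra all_fingroup.
From mathcomp Require Import reals.
From mathcomp Require Import ring lra.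
Set Implicit Arguments. Unset Strict Implicit. Unset Printing Implicit Defensive.
Import Order.TTheory GRing.Theory Num.Theory.
Local Open Scope ring_scope.

Section Had.
Variable R : realFieldType.

Definition qf n (G : 'M[R]_n) (x : 'I_n -> R) := \sum_i \sum_j x i * G i j * x j.

Lemma sumd n (F : 'I_n -> R) j : \sum_k F k * (k == j)%:R = F j.
Proof.
rewrite (bigD1 j) //= eqxx mulr1 big1 ?addr0 // => k /negbTE ->; by rewrite mulr0.
Qed.

Lemma sum2 n (F : 'I_n -> R) (i0 j : 'I_n) (t : R) :
  \sum_k F k * (t * (k == i0)%:R + (k == j)%:R) = t * F i0 + F j.
Proof.
rewrite -(sumd F i0) -(sumd F j) mulr_sumr -big_split /=.
by apply: eq_bigr => k _; ring.
Qed.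

Lemma qf2 n (G : 'M[R]_n) (i0 j : 'I_n) (t : R) :
  qf G (fun k => t * (k == i0)%:R + (k == j)%:R) =
  t * (t * G i0 i0 + G i0 j) + (t * G j i0 + G j j).
Proof.
rewrite /qf.
under eq_bigr => i _.
  rewrite (eq_bigr (fun k => ((t * (i == i0)%:R + (i == j)%:R) * G i k) * (t * (k == i0)%:R + (k == j)%:R))); last by move=> k _; ring.
  rewrite sum2. over.
rewrite /= (eq_bigr (fun i => (t * G i i0 + G i j) * (t * (i == i0)%:R + (i == j)%:R))); last by move=> i _; ring.
rewrite sum2; ring.
Qed.

Lemma psd_diag n (G : 'M[R]_n) : (forall x, 0 <= qf G x) -> forall i, 0 <= G i i.
Proof.
move=> Gp i; have := Gp (fun k => 0 * (k == i)%:R + (k == i)%:R).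
by rewrite qf2 !mul0r !add0r.

Qed.

Lemma mulE n (G : 'M[R]_n.+1) (a : R) :
  let E := \matrix_(i, j) ((i == j)%:R - (j == ord0)%:R * (i != ord0)%:R * G i ord0 / a) in
  forall i j, (E *m G) i j = G i j - (i != ord0)%:R * G i ord0 / a * G ord0 j.
Proof.
move=> E i j; rewrite mxE.
rewrite (eq_bigr (fun k => G k j * (k == i)%:R - ((i != ord0)%:R * G i ord0 / a * G k j) * (k == ord0)%:R)); last first.
  by move=> k _; rewrite mxE (eq_sym i k); ring.
by rewrite sumrB sumd (sumd (fun k => (i != ord0)%:R * G i ord0 / a * G k j)).
Qed.

Lemma schur_det n (G : 'M[R]_n.+1) (a : R) : a = G ord0 ord0 -> a != 0 ->
  \det G = a * \det (\matrix_(i, j) (G (lift ord0 i) (lift ord0 j)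
        - G (lift ord0 i) ord0 * G ord0 (lift ord0 j) / a) : 'M_n).
Proof.
move=> ae anz.
pose E := \matrix_(i, j) ((i == j)%:R - (j == ord0)%:R * (i != ord0)%:R * G i ord0 / a) : 'M_n.+1.
have dE : \det E = 1.
  rewrite det_trig; last first.
    apply/is_trig_mxP => i j lij; rewrite mxE.
    have -> : (i == j) = false by apply/negbTE; rewrite neq_ltn lij.
    have -> : (j == ord0) = false by apply/negbTE; rewrite -val_eqE /= -lt0n (leq_ltn_trans _ lij).
    by rewrite !mul0r subr0.
  by rewrite big1 // => i _; rewrite mxE eqxx; case: (i == ord0); rewrite /= ?mulr0 ?mul0r ?mul1r ?mulr1 ?subr0 ?subrr; idtac.
have -> : \det G = \det (E *m G) by rewrite det_mulmx dE mul1r.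
rewrite (expand_det_col _ ord0) big_ord_recl big1; last first.
  move=> i _; rewrite mulE /= -ae.
  by rewrite mul1r mulfVK // subrr mul0r.
rewrite addr0 mulE eqxx /= -ae.
rewrite !mul0r subr0; congr (_ * _).
rewrite /cofactor expr0 mul1r; congr (\det _).
apply/matrixP => i j; rewrite [RHS]mxE; rewrite [LHS]mxE [LHS]mxE mulE.
by rewrite eq_sym neq_lift mul1r; ring.
Qed.

Lemma schur_qf n (G : 'M[R]_n.+1) (a : R) (x : 'I_n -> R) :
  a = G ord0 ord0 -> a != 0 -> (forall i j, G i j = G j i) ->
  let beta := \sum_k G ord0 (lift ord0 k) * x k in
  let y := fun k => if unlift ord0 k is Some i then x i else - beta / a in
  qf (\matrix_(i, j) (G (lift ord0 i) (lift ord0 j)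
        - G (lift ord0 i) ord0 * G ord0 (lift ord0 j) / a) : 'M_n) x = qf G y.
Proof.
move=> ae anz Gs beta y.
have yl : forall i, y (lift ord0 i) = x i by move=> i; rewrite /y liftK.
have y0 : y ord0 = - beta / a by rewrite /y unlift_none.
pose S := \sum_i \sum_k x i * G (lift ord0 i) (lift ord0 k) * x k.
have e1 : qf (\matrix_(i, j) (G (lift ord0 i) (lift ord0 j)
        - G (lift ord0 i) ord0 * G ord0 (lift ord0 j) / a) : 'M_n) x = S - beta * beta / a.
  rewrite /qf /S /beta mulr_suml mulr_suml -sumrB; apply: eq_bigr => i _.
  rewrite mulr_sumr mulr_suml -sumrB; apply: eq_bigr => k _.
  rewrite mxE (Gs (lift ord0 i) ord0); field; exact: anz.
have e2 : qf G y = y ord0 * y ord0 * a + y ord0 * beta + y ord0 * beta + S.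
  rewrite /qf big_ord_recl big_ord_recl.
  under [X in _ + X = _]eq_bigr => ii _ do rewrite big_ord_recl.
  rewrite big_split /= -!addrA; congr (_ + _); first by rewrite ae; ring.
  rewrite /beta mulr_sumr; congr (_ + _).
    by apply: eq_bigr => k _; rewrite yl; ring.
  rewrite /S; congr (_ + _); last first.
    by apply: eq_bigr => i _; apply: eq_bigr => k _; rewrite !yl.
  apply: eq_bigr => k _; rewrite yl (Gs _ ord0); ring.
rewrite e1 e2 y0; field; exact: anz.
Qed.

Lemma hadamard n (G : 'M[R]_n) : (forall i j, G i j = G j i) ->
  (forall x, 0 <= qf G x) -> 0 <= \det G <= \prod_i G i i.
Proof.
elim: n G => [|n IH] G Gs Gp.
  by rewrite det_mx00 big_ord0 ler01 lexx.
have Gd := psd_diag Gp.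
have pge0 : 0 <= \prod_i G i i by apply: prodr_ge0 => i _.
set a := G ord0 ord0.
have [a0|apos] : a = 0 \/ 0 < a.
  by have := Gd ord0; rewrite le_eqVlt => /orP [/eqP ->|->]; [left|right].
  have row0 : forall j, G ord0 j = 0.
    move=> j; apply/eqP; apply/negP => /negP bnz.
    pose t := - (G j j + 1) / (2 * G ord0 j).
    have tb : t * G ord0 j = - (G j j + 1) / 2.
      rewrite /t; field; exact: bnz.
    have := Gp (fun k => t * (k == ord0)%:R + (k == j)%:R).
    rewrite qf2 -/a a0 (Gs j ord0) mulr0 add0r tb; lra.
  have -> : \det G = 0.
    by rewrite (expand_det_row _ ord0) big1 // => j _; rewrite row0 mul0r.
  by rewrite lexx pge0.
have anz : a != 0 by apply: lt0r_neq0.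
pose K := (\matrix_(i, j) (G (lift ord0 i) (lift ord0 j)
        - G (lift ord0 i) ord0 * G ord0 (lift ord0 j) / a) : 'M_n).
have Ks : forall i j, K i j = K j i.
  by move=> i j; rewrite !mxE (Gs (lift ord0 j) (lift ord0 i)) (Gs (lift ord0 i) ord0) (Gs ord0 (lift ord0 j)); ring.
have Kp : forall x, 0 <= qf K x.
  by move=> x; rewrite (schur_qf x (erefl a) anz Gs).
have [dK0 dK1] := andP (IH K Ks Kp).
have Kd := psd_diag Kp.
rewrite (schur_det (erefl a) anz) -/K big_ord_recl -/a.
apply/andP; split; first by apply: mulr_ge0 => //; apply: ltW.
apply: ler_wpM2l; first by apply: ltW.
apply: (le_trans dK1); apply: ler_prod => i _; rewrite Kd /= mxE.
rewrite lerBlDr lerDl (Gs (lift ord0 i) ord0) -expr2 mulr_ge0 ?sqr_ge0 //.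
by rewrite invr_ge0 ltW.
Qed.

Lemma mulcol m n (C : 'M[R]_(m, n)) (f : 'I_n -> R) i :
  (C *m \col_k f k) i 0 = \sum_j C i j * f j.
Proof. by rewrite mxE; apply: eq_bigr => j _; rewrite mxE. Qed.

Lemma prod_ge1 n (F : 'I_n -> R) : (forall i, 0 <= F i <= 1) ->
  1 <= \prod_i F i -> forall i, F i = 1.
Proof.
move=> F01 p1 i; have := F01 i => /andP [Fi0 Fi1].
apply/eqP; rewrite eq_le Fi1 /=.
apply: (le_trans p1); rewrite (bigD1 i) //=.
rewrite -[X in _ <= X]mulr1; apply: ler_wpM2l => //.
by apply: prodr_ile1 => j _; apply: F01.
Qed.

Lemma gram_sym m n (B : 'M[R]_(m, n)) i j : (B *m B^T) i j = (B *m B^T) j i.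
Proof. by rewrite !mxE; apply: eq_bigr => k _; rewrite !mxE mulrC. Qed.

Lemma gram_diag m n (B : 'M[R]_(m, n)) i : (B *m B^T) i i = \sum_k B i k * B i k.
Proof. by rewrite !mxE; apply: eq_bigr => k _; rewrite !mxE. Qed.

Lemma gram_psd m n (B : 'M[R]_(m, n)) x : 0 <= qf (B *m B^T) x.
Proof.
have -> : qf (B *m B^T) x = \sum_k (\sum_i x i * B i k) * (\sum_j x j * B j k).
  rewrite /qf exchange_big /=.
  under eq_bigr => i _ do under eq_bigr => j _ do rewrite mxE mulr_sumr mulr_suml.
  under eq_bigr => i _ do rewrite exchange_big /=.
  rewrite exchange_big /=; apply: eq_bigr => k _.
  rewrite mulr_suml; apply: eq_bigr => j _; rewrite mulr_sumr; apply: eq_bigr => i _.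
  by rewrite mxE; ring.
by apply: sumr_ge0 => k _; rewrite -expr2 sqr_ge0.
Qed.

Lemma rowbound n (a : 'I_n -> R) :
  (forall u : 'cV[R]_n, \sum_k u k 0 * u k 0 <= 1 -> \sum_j a j * u j 0 <= 1) ->
  \sum_j a j * a j <= 1.
Proof.
move=> H; set s := \sum_j a j * a j.
have s0 : 0 <= s by apply: sumr_ge0 => j _; rewrite -expr2 sqr_ge0.
pose t := 2 / (1 + s).
have s1 : 0 < 1 + s by lra.
have := H (\col_k (t * a k)).
have e1 : \sum_k (\col_k (t * a k) : 'cV_n) k 0 * (\col_k (t * a k) : 'cV_n) k 0 = t * t * s.
  rewrite /s mulr_sumr; apply: eq_bigr => k _; rewrite !mxE; ring.
have e2 : \sum_j a j * (\col_k (t * a k) : 'cV_n) j 0 = t * s.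
  rewrite /s mulr_sumr; apply: eq_bigr => k _; rewrite !mxE; ring.
rewrite e1 e2.
have ts : t * s = 2 * s / (1 + s) by rewrite /t; field; apply: lt0r_neq0.
have tts : t * t * s = 4 * s / ((1 + s) * (1 + s)) by rewrite /t; field; apply: lt0r_neq0.
rewrite ts tts ler_pdivrMr; last by apply: mulr_gt0.
rewrite mul1r => /(_ _) h.
have : 2 * s / (1 + s) <= 1 by apply: h; have := sqr_ge0 (1 - s); rewrite expr2; nra.
rewrite ler_pdivrMr // mul1r; lra.
Qed.

Lemma abs_cases (x : R) : (`|x| = x /\ 0 <= x) \/ (`|x| = - x /\ x < 0).
Proof.
case: (lerP 0 x) => h; [left; rewrite ger0_norm | right; rewrite ltr0_norm]; by [].
Qed.

Lemma row_char n (a : 'I_n -> R) :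
  \sum_j `|a j| <= 1 -> \sum_j a j * a j = 1 ->
  exists k, (a k = 1 \/ a k = -1) /\ forall j, j != k -> a j = 0.
Proof.
move=> s1 s2.
have le1 : forall j, `|a j| <= 1.
  move=> j; apply: le_trans s1; rewrite (bigD1 j) //= lerDl.
  by apply: sumr_ge0 => i _.
have sq : forall j, a j * a j <= `|a j|.
  move=> j; have := le1 j; case: (abs_cases (a j)) => [[-> h]|[-> h]] h1; nra.
have eq0 : forall j, `|a j| - a j * a j = 0.
  move=> j0; apply: (@psumr_eq0P _ _ predT (fun j => `|a j| - a j * a j)) => //.
    by move=> j _; rewrite subr_ge0.
  apply/eqP; rewrite eq_le; apply/andP; split; last first.
    by apply: sumr_ge0 => j _; rewrite subr_ge0.
  by rewrite sumrB s2 subr_le0.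
have [k ak] : exists k, a k != 0.
  apply/existsP; apply/negP => /existsP nk.
  have : \sum_j a j * a j = 0.
    apply: big1 => j _; have : ~~ (a j != 0) by apply/negP => h; apply: nk; exists j.
    by rewrite negbK => /eqP ->; rewrite mulr0.
  by rewrite s2; apply/eqP; rewrite oner_eq0.
exists k.
have ak1 : a k = 1 \/ a k = -1.
  have := eq0 k; move: ak; case: (abs_cases (a k)) => [[-> h]|[-> h]] nz e.
    left; have : a k * (1 - a k) = 0 by rewrite -e; ring.
    move/eqP; rewrite mulf_eq0 (negbTE nz) /= subr_eq0 => /eqP; lra.
  right; have : a k * (1 + a k) = 0 by rewrite -oppr0 -e; ring.
  move/eqP; rewrite mulf_eq0 (negbTE nz) /= addr_eq0 => /eqP; lra.
split => // j jk.
have : \sum_(i | i != k) `|a i| = 0.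
  apply/eqP; rewrite eq_le sumr_ge0 // andbT.
  move: s1; rewrite (bigD1 k) //=.
  by case: ak1 => ->; rewrite ?normrN normr1; lra.
move/(@psumr_eq0P _ _ _ (fun i => `|a i|)) => /(_ (fun i _ => normr_ge0 _) j jk).
by move/eqP; rewrite normr_eq0 => /eqP.
Qed.
End Had.

Section Main.
Variable R : realType.

Lemma dot_qf n (C : 'M[R]_n) (u : 'cV[R]_n) : dotv u (C *m u) = qf C (fun i => u i 0).
Proof.
rewrite /dotv /qf; apply: eq_bigr => i _; rewrite mxE mulr_sumr.
by apply: eq_bigr => j _; ring.
Qed.

Lemma sqnormE n (u : 'cV[R]_n) : sqnorm u = \sum_k u k 0 * u k 0.
Proof. by []. Qed.

Lemma sq_le_sqnorm n (u : 'cV[R]_n) i : u i 0 * u i 0 <= sqnorm u.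
Proof.
by rewrite sqnormE (bigD1 i) //= lerDl; apply: sumr_ge0 => j _; rewrite -expr2 sqr_ge0.
Qed.

Lemma ball_Binf n (u : 'cV[R]_n) : sqnorm u <= 1 -> Binf u.
Proof.
move=> h i; have := le_trans (sq_le_sqnorm u i) h.
case: (abs_cases (u i 0)) => [[-> _]|[-> _]] h2; nra.
Qed.

Lemma ell_Binf n (C : 'M[R]_n) g : Defs.subset (ellipsoid C g) (@Binf R n) ->
  forall u, sqnorm u <= 1 -> forall i, -1 <= (C *m u) i 0 + g i 0 <= 1.
Proof.
move=> h u hu i; rewrite -ler_norml.
have := h (C *m u + g) (ex_intro _ u (conj hu erefl)) i.
by rewrite mxE.
Qed.

Lemma sqnorm_col n (f : 'I_n -> R) : sqnorm (\col_k f k) = \sum_k f k * f k.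
Proof. by rewrite sqnormE; apply: eq_bigr => k _; rewrite !mxE. Qed.

Lemma sqnormN n (u : 'cV[R]_n) : sqnorm (- u) = sqnorm u.
Proof. by rewrite !sqnormE; apply: eq_bigr => k _; rewrite !mxE mulrNN. Qed.


Lemma qf_ext n (G : 'M[R]_n) x y : (forall i, x i = y i) -> qf G x = qf G y.
Proof. by move=> h; apply: eq_bigr => i _; apply: eq_bigr => j _; rewrite !h. Qed.

Lemma mul_e m n (C : 'M[R]_(m, n)) (s : R) i j :
  (C *m \col_k (s * (k == i)%:R)) j 0 = s * C j i.
Proof.
rewrite mulcol (eq_bigr (fun k => (s * C j k) * (k == i)%:R)) ?sumd //.
by move=> k _; ring.
Qed.

Lemma sqnorm_e n (s : R) (i : 'I_n) : sqnorm (\col_k (s * (k == i)%:R)) = s * s.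
Proof.
rewrite sqnorm_col (eq_bigr (fun k => (s * s * (k == i)%:R) * (k == i)%:R)).
  by rewrite sumd eqxx mulr1.
by move=> k _; case: (k == i); rewrite /= ?mulr0 ?mulr1.
Qed.

Lemma convE n N (S : 'M[R]_(n, N)) (lam : 'I_N -> R) k :
  (\sum_j lam j *: col j S) k 0 = \sum_j lam j * S k j.
Proof. by rewrite summxE; apply: eq_bigr => j _; rewrite !mxE. Qed.

Lemma rowA m n N (A : 'M[R]_(m, n)) (S : 'M[R]_(n, N)) (lam : 'I_N -> R) i :
  (A *m \sum_j lam j *: col j S) i 0 = \sum_j lam j * (A *m S) i j.
Proof.
rewrite mxE; under eq_bigr => k _ do rewrite convE mulr_sumr.
rewrite exchange_big /=; apply: eq_bigr => j _; rewrite mxE mulr_sumr.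
by apply: eq_bigr => k _; ring.
Qed.

End Main.

Theorem theorem2 (R : realType) (r M N : nat)
  (Hg : 'M[R]_(M, r)) (Sg : 'M[R]_(r, N)) :
  (0 < r)%N -> (r <= M)%N -> (r <= N)%N ->
  \rank Hg = r ->
  (forall j, Binf (col j Sg)) ->
  suff_scattered Sg (@Binf R r) ->
  forall (Hs : 'M[R]_(M, r)) (Ss : 'M[R]_(r, N)),
    (* (Hs, Ss) is a global optimum of the Det-Max problem *)
    (Hg *m Sg = Hs *m Ss /\ (forall j, Binf (col j Ss)) /\
     forall (H : 'M[R]_(M, r)) (S : 'M[R]_(r, N)),
       Hg *m Sg = H *m S -> (forall j, Binf (col j S)) ->
       \det (S *m S^T) <= \det (Ss *m Ss^T)) ->
    exists (s : 'S_r) (d : 'I_r -> R),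
      (forall i, d i = 1 \/ d i = -1) /\
      Hs = Hg *m (perm_mx s)^T *m diag_mx (\row_i d i) /\
      Ss = diag_mx (\row_i d i) *m perm_mx s *m Sg.
Proof.
move=> r0 rM rN rkHg SgB [C [g [[Cpsd [ECsub Cmax]] [convsub [Esub polarEq]]]]]
  Hs Ss [HSeq [SsB Sopt]].
have Cs : forall i j, C i j = C j i.
  by move=> i j; case: Cpsd => ct _; rewrite -{1}ct mxE.
have Cp : forall x, 0 <= qf C x.
  move=> x; case: Cpsd => _ h; have := h (\col_k x k); rewrite dot_qf.
  by rewrite (@qf_ext _ _ C x (fun i => (\col_k x k) i 0)) // => i; rewrite mxE.
have det1C : 1 <= \det C.
  rewrite -(det1 _ r); apply: (Cmax _ 0).
    split; first exact: trmx1.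
    by move=> u; rewrite mul1mx; apply: sumr_ge0 => k _; rewrite -expr2 sqr_ge0.
  by move=> x [u [hu ->]]; rewrite mul1mx addr0; apply: ball_Binf.
have Cd := psd_diag Cp.
have /andP [_ hadC] := hadamard Cs Cp.
have Cii1 : forall i, C i i <= 1.
  move=> i.
  have h1 := @ell_Binf _ _ _ _ ECsub (\col_k (1 * (k == i)%:R)).
  have h2 := @ell_Binf _ _ _ _ ECsub (\col_k (-1 * (k == i)%:R)).
  move: h1 h2; rewrite !sqnorm_e !mulrNN !mulr1 !lexx => h1 h2.
  have := h1 isT i; have := h2 isT i.
  rewrite !mul_e.
  lra.
have Cii : forall i, C i i = 1.
  apply: (prod_ge1 (F := fun i => C i i)); last exact: le_trans det1C hadC.
  by move=> i; rewrite Cd Cii1.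
have Crow : forall i, \sum_j C i j * C i j <= 1.
  move=> i; apply: rowbound => u hu.
  have := ell_Binf ECsub hu i.
  have := @ell_Binf _ _ _ _ ECsub (- u) (ltac:(by rewrite sqnormN)) i.
  rewrite mulmxN !mxE; lra.
have C1 : C = 1%:M.
  apply/matrixP => i j; rewrite mxE; case: (eqVneq i j) => [<-|ij]; first by rewrite Cii.
  have := Crow i; rewrite (bigD1 i) //= Cii mul1r => h.
  have h0 : \sum_(k | k != i) C i k * C i k = 0.
    apply/eqP; rewrite eq_le; apply/andP; split; first lra.
    by apply: sumr_ge0 => k _; rewrite -expr2 sqr_ge0.
  have nn : forall k, k != i -> 0 <= C i k * C i k by move=> k _; rewrite -expr2 sqr_ge0.
  have := @psumr_eq0P _ _ (fun k => k != i) (fun k => C i k * C i k) _ h0 j.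
  by rewrite eq_sym ij => /(_ nn isT) /eqP; rewrite mulf_eq0 orbb => /eqP ->.
subst C.
have g0 : g = 0.
  apply/matrixP => i j; rewrite (ord1 j) [RHS]mxE.
  have h1 := @ell_Binf _ _ _ _ ECsub (\col_k (1 * (k == i)%:R)).
  have h2 := @ell_Binf _ _ _ _ ECsub (\col_k (-1 * (k == i)%:R)).
  move: h1 h2; rewrite !sqnorm_e !mulrNN !mulr1 !lexx => h1 h2.
  have := h1 isT i; have := h2 isT i.
  rewrite !mul_e !mxE eqxx.
  rewrite !mulr1; lra.
subst g.
have ball_conv : forall u, sqnorm u <= 1 -> conv Sg u.
  by move=> u hu; apply: Esub; exists u; rewrite mul1mx addr0.
pose G := Sg *m Sg^T.
have Gnz : \det G != 0.
  apply/negP => /det0P [v vnz vG].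
  have w0 : forall k, (v *m Sg) 0 k = 0.
    have e : (v *m G *m v^T) 0 0 = \sum_k (v *m Sg) 0 k * (v *m Sg) 0 k.
      by rewrite /G mulmxA -mulmxA -trmx_mul gram_diag.
    move: e; rewrite vG mul0mx mxE => /esym e k.
    have nn : forall k, predT k -> 0 <= (v *m Sg) 0 k * (v *m Sg) 0 k.
      by move=> k' _; rewrite -expr2 sqr_ge0.
    have := @psumr_eq0P _ _ predT (fun k => (v *m Sg) 0 k * (v *m Sg) 0 k) nn e k isT.
    by move/eqP; rewrite mulf_eq0 orbb => /eqP.
  move/eqP: vnz; apply; apply/matrixP => i k; rewrite (ord1 i) [RHS]mxE.
  have hk : sqnorm (\col_l (1 * (l == k)%:R) : 'cV[R]_r) <= 1 by rewrite sqnorm_e mulr1.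
  have [lam [_ [_ ek]]] := ball_conv _ hk.
  have := mul_e v 1 k 0; rewrite mul1r ek rowA => <-.
  by apply: big1 => j _; rewrite w0 mulr0.
have Gpos : 0 < \det G.
  have /andP [h _] := hadamard (@gram_sym _ _ _ Sg) (@gram_psd _ _ _ Sg).
  by rewrite lt_def Gnz h.
have Gunit : G \in unitmx by rewrite unitmxE unitfE.
pose T := Sg^T *m invmx G.
have SgT : Sg *m T = 1%:M by rewrite /T mulmxA mulmxV.
have [L LH] : exists L, L *m Hg = 1%:M by apply/row_fullP; rewrite /row_full rkHg.
pose P := L *m Hs.
have SgP : Sg = P *m Ss by rewrite /P -mulmxA -HSeq mulmxA LH mul1mx.
have Punit : P \in unitmx.
  have : P *m (Ss *m T) = 1%:M by rewrite mulmxA -SgP SgT.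
  by case/mulmx1_unit.
pose A := invmx P.
have SsA : Ss = A *m Sg by rewrite SgP mulKmx.
have HgA : Hg = Hs *m A.
  by rewrite -[Hg]mulmx1 -SgT mulmxA HSeq SsA -!mulmxA SgT mulmx1.
have HsP : Hs = Hg *m P by rewrite HgA -mulmxA mulVmx // mulmx1.
have detA : 1 <= \det A * \det A.
  have := Sopt Hg Sg erefl SgB.
  rewrite SsA trmx_mul !mulmxA -[A *m Sg *m Sg^T]mulmxA -/G !det_mulmx det_tr.
  move=> h; have : \det G * 1 <= \det G * (\det A * \det A) by rewrite mulr1; lra.
  by rewrite ler_pM2l.
have conv_le1 : forall y, conv Sg y -> forall i, (A *m y) i 0 <= 1.
  move=> y [lam [lam0 [lam1 ->]]] i; rewrite rowA -SsA.
  have e1 : \sum_j lam j * 1 = 1 by under eq_bigr do rewrite mulr1; exact: lam1.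
  rewrite -[X in _ <= X]e1; apply: ler_sum => j _; apply: ler_wpM2l => //.
  by have := SsB j i; rewrite mxE ler_norml => /andP [_ ->].
have rle : forall i, \sum_k A i k * A i k <= 1.
  move=> i; apply: rowbound => u hu; have := conv_le1 u (ball_conv u hu) i.
  by rewrite mxE.
have rho : forall i, \sum_k A i k * A i k = 1.
  have /andP [_ hadA] := hadamard (@gram_sym _ _ _ A) (@gram_psd _ _ _ A).
  move: hadA; rewrite det_mulmx det_tr => hadA.
  move=> i; rewrite -gram_diag; apply: (prod_ge1 (F := fun i => (A *m A^T) i i)) (le_trans detA hadA) i.
  move=> k; rewrite gram_diag rle andbT.
  by apply: sumr_ge0 => l _; rewrite -expr2 sqr_ge0.
have rowc : forall i, exists k, (A i k = 1 \/ A i k = -1) /\ forall j, j != k -> A i j = 0.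
  move=> i; pose x := (\col_k A i k : 'cV[R]_r).
  have sx : sqnorm x = 1 by rewrite sqnorm_col rho.
  have dotx : forall y, dotv x y = (A *m y) i 0.
    by move=> y; rewrite /dotv mxE; apply: eq_bigr => k _; rewrite mxE.
  have pol1 : polar (conv Sg) 0 x by move=> y hy; rewrite subr0 dotx; exact: conv_le1.
  have polE : polar (ellipsoid 1%:M 0) 0 x.
    move=> y [u [hu ->]]; rewrite mul1mx addr0 subr0.
    have : \sum_k (2 * (x k 0 * u k 0)) <= \sum_k (x k 0 * x k 0 + u k 0 * u k 0).
      by apply: ler_sum => k _; have := sqr_ge0 (x k 0 - u k 0); rewrite expr2; nra.
    rewrite big_split /= -mulr_sumr.
    change (2 * dotv x u <= sqnorm x + sqnorm u -> dotv x u <= 1).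
    rewrite sx; lra.
  have xE : ellipsoid 1%:M 0 x by exists x; rewrite mul1mx addr0 sx lexx.
  have bd1 : bd (polar (ellipsoid 1%:M 0) 0) x.
    move=> e he; split.
      exists x; split => //; rewrite subrr sqnormE big1 ?exprn_gt0 // => k _.
      by rewrite mxE mul0r.
    exists ((1 + e / 2) *: x); split.
      move=> h; have := h x xE; rewrite subr0.
      have -> : dotv ((1 + e / 2) *: x) x = (1 + e / 2) * sqnorm x.
        by rewrite /sqnorm /dotv mulr_sumr; apply: eq_bigr => k _; rewrite mxE mulrA.
      rewrite sx; lra.
    have -> : sqnorm ((1 + e / 2) *: x - x) = e / 2 * (e / 2) * sqnorm x.
      by rewrite /sqnorm /dotv mulr_sumr; apply: eq_bigr => k _; rewrite !mxE; ring.
    rewrite sx expr2; nra.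
  have [pB _] := (polarEq x).1 (conj pol1 bd1).
  pose y := (\col_k (if 0 <= A i k then 1 else -1) : 'cV[R]_r).
  have yB : Binf y by move=> k; rewrite mxE; case: ifP; rewrite ?normrN normr1.
  have := pB y yB; rewrite subr0 /dotv => hs.
  apply: row_char; last exact: rho i.
  apply: (le_trans _ hs); rewrite le_eqVlt; apply/orP; left; apply/eqP.
  apply: eq_bigr => k _; rewrite !mxE.
  case: (abs_cases (A i k)) => [[-> h]|[-> h]].
    by rewrite h mulr1.
  by rewrite leNgt h /= mulrN1.
pose f i := odflt i [pick k | A i k != 0].
have fP : forall i, (A i (f i) = 1 \/ A i (f i) = -1) /\ forall j, j != f i -> A i j = 0.
  move=> i; have [k [hk hj]] := rowc i.
  suff -> : f i = k by [].
  rewrite /f; case: pickP => [k' hk' | none] /=.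
    by apply/eqP; apply/negPn/negP => nk; move: hk'; rewrite (hj k' nk) eqxx.
  have := none k; rewrite /=; case: hk => ->; rewrite ?oppr_eq0 oner_eq0 //.
have mulf : forall (X : 'M[R]_r) i j, (A *m X) i j = A i (f i) * X (f i) j.
  move=> X i j; rewrite mxE (bigD1 (f i)) //= big1 ?addr0 // => k hk.
  by rewrite (proj2 (fP i)) ?mul0r.
have finj : injective f.
  move=> i i' fe; apply/eqP; apply/negPn/negP => ii.
  have AP : A *m P = 1%:M by rewrite mulVmx.
  have h1 : (A *m P) i i = 1 by rewrite AP mxE eqxx.
  have h2 : (A *m P) i' i = 0 by rewrite AP mxE eq_sym (negbTE ii).
  have e1 := proj1 (fP i); have e2 := proj1 (fP i'); rewrite fe in e1.
  move: h1 h2; rewrite !mulf fe.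
  by case: e1 => ->; case: e2 => ->; lra.
pose s := perm finj.
pose d i := A i (f i).
have Adef : A = diag_mx (\row_i d i) *m perm_mx s.
  apply/matrixP => i j; rewrite mul_diag_mx !mxE permE /d.
  case: (eqVneq (f i) j) => [e|ne]; first by rewrite e mulr1.
  by rewrite mulr0 (proj2 (fP i) j) // eq_sym.
have AX : A *m ((perm_mx s)^T *m diag_mx (\row_i d i)) = 1%:M.
  rewrite Adef mulmxA -[diag_mx _ *m perm_mx s *m (perm_mx s)^T]mulmxA tr_perm_mx.
  rewrite -perm_mxM mulgV perm_mx1 mulmx1.
  apply/matrixP => i j; rewrite mul_diag_mx !mxE.
  case: (eqVneq i j) => [e|ne]; last by rewrite mulr0n mulr0.
  by rewrite !mulr1n /d; case: (proj1 (fP i)) => ->; rewrite ?mulrNN mulr1.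
exists s, d; split; first by move=> i; exact: (proj1 (fP i)).
split.
  rewrite HsP -mulmxA; congr (_ *m _).
  have -> : P = P *m (A *m ((perm_mx s)^T *m diag_mx (\row_i d i))) by rewrite AX mulmx1.
  by rewrite /A !mulmxA mulmxV // mul1mx.
by rewrite SsA Adef.
Qed.
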